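(* Let $A\in\mathbb C^{m\times n}$, $m<n$, have full rank, let $0<p_0\le1$, and assume there exists $X\in\mathcal G(A)$ each of whose columns has at most $k_{p_0}(A)$ nonzero entries. Then for all $0<q<\infty$ and all $0\le p\le p_0$, $\mathrm{ginv}_{\mathrm{col}(p,q)}(A)=\{X\}$.
   Context: $\mathcal G(A)=\{X\in\mathbb C^{n\times m}:AX=I_m\}$, $\mathrm{ginv}_\nu(A)=\arg\min_{X\in\mathcal G(A)}\|X\|_\nu$. $\|x\|_0$ is the number of nonzero entries of $x$, and for $0<p<1$, $\|x\|_p=(\sum_i|x_i|^p)^{1/p}$. For $M$ with columns $m_j$, $\|M\|_{\mathrm{col}(p,q)}=(\sum_j\|m_j\|_p^q)^{1/q}$. For $0\le p\le1$, $k_p(A)$ is the largest integer $k$ such that for every $x\in\mathbb C^n$ with $\|x\|_0\le k$, $x$ is the unique minimizer of $\|\hat x\|_p$ subject to $A\hat x=Ax$. *)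

(* Defs.v *)
From Stdlib Require Import Reals.
Open Scope R_scope.

Record Cplx := mkC { Re : R ; Im : R }.
Definition C0 : Cplx := mkC 0 0.
Definition C1 : Cplx := mkC 1 0.
Definition Cadd (z w : Cplx) : Cplx := mkC (Re z + Re w) (Im z + Im w).
Definition Cmul (z w : Cplx) : Cplx :=
  mkC (Re z * Re w - Im z * Im w) (Re z * Im w + Im z * Re w).
Definition Cmod (z : Cplx) : R := sqrt (Re z * Re z + Im z * Im z).

Definition Ceq_dec (z w : Cplx) : {z = w} + {z <> w}.
Proof.
  destruct z as [a b], w as [c d].
  destruct (Req_EM_T a c) as [H1|H1]; destruct (Req_EM_T b d) as [H2|H2].
  - left; subst; reflexivity.
  - right; intros H; inversion H; contradiction.
  - right; intros H; inversion H; contradiction.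
  - right; intros H; inversion H; contradiction.
Defined.

Fixpoint Csum (f : nat -> Cplx) (n : nat) : Cplx :=
  match n with O => C0 | S k => Cadd (Csum f k) (f k) end.
Fixpoint Rsum (f : nat -> R) (n : nat) : R :=
  match n with O => 0 | S k => Rsum f k + f k end.

(* real power with the convention 0^a = 0 (used only for a > 0) *)
Definition rpow (x a : R) : R := if Rlt_dec 0 x then Rpower x a else 0.

(* ---------- vectors and matrices ----------
   A vector of Cplx^n is a function nat -> Cplx of which only the entries i < n matter;
   an m x n matrix is a function nat -> nat -> Cplx of which only entries i<m, j<n matter. *)
Definition vec_eq (n : nat) (x y : nat -> Cplx) : Prop := forall i, (i < n)%nat -> x i = y i.
Definition mat_eq (m n : nat) (X Y : nat -> nat -> Cplx) : Prop :=
  forall i j, (i < m)%nat -> (j < n)%nat -> X i j = Y i j.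

Definition mulmv (n : nat) (A : nat -> nat -> Cplx) (x : nat -> Cplx) : nat -> Cplx :=
  fun i => Csum (fun k => Cmul (A i k) (x k)) n.
Definition mulmm (n : nat) (A X : nat -> nat -> Cplx) : nat -> nat -> Cplx :=
  fun i j => Csum (fun k => Cmul (A i k) (X k j)) n.
Definition col (M : nat -> nat -> Cplx) (j : nat) : nat -> Cplx := fun i => M i j.

Definition full_row_rank (m n : nat) (A : nat -> nat -> Cplx) : Prop :=
  forall y : nat -> Cplx,
    (forall k, (k < n)%nat -> Csum (fun i => Cmul (y i) (A i k)) m = C0) ->
    forall i, (i < m)%nat -> y i = C0.

Definition in_G (m n : nat) (A X : nat -> nat -> Cplx) : Prop :=
  forall i j, (i < m)%nat -> (j < m)%nat ->
    mulmm n A X i j = (if Nat.eq_dec i j then C1 else C0).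

Fixpoint nnz (n : nat) (x : nat -> Cplx) : nat :=
  match n with
  | O => O
  | S k => (nnz k x + (if Ceq_dec (x k) C0 then 0 else 1))%nat
  end.

Definition pnorm (n : nat) (p : R) (x : nat -> Cplx) : R :=
  if Req_EM_T p 0 then INR (nnz n x)
  else rpow (Rsum (fun i => rpow (Cmod (x i)) p) n) (/ p).

Definition colnorm (n m : nat) (p q : R) (M : nat -> nat -> Cplx) : R :=
  rpow (Rsum (fun j => rpow (pnorm n p (col M j)) q) m) (/ q).

Definition in_ginv_col (m n : nat) (p q : R) (A X : nat -> nat -> Cplx) : Prop :=
  in_G m n A X /\
  forall Y, in_G m n A Y -> colnorm n m p q X <= colnorm n m p q Y.

Definition unique_lp_minimizer (m n : nat) (p : R) (A : nat -> nat -> Cplx) (x : nat -> Cplx) : Prop :=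
  let feas := fun xh => vec_eq m (mulmv n A xh) (mulmv n A x) in
  (forall xh, feas xh -> pnorm n p x <= pnorm n p xh) /\
  (forall y, feas y -> (forall xh, feas xh -> pnorm n p y <= pnorm n p xh) -> vec_eq n y x).

Definition kp_prop (m n : nat) (p : R) (A : nat -> nat -> Cplx) (k : nat) : Prop :=
  forall x : nat -> Cplx, (nnz n x <= k)%nat -> unique_lp_minimizer m n p A x.

Definition is_kp (m n : nat) (p : R) (A : nat -> nat -> Cplx) (k : nat) : Prop :=
  kp_prop m n p A k /\ forall k', kp_prop m n p A k' -> (k' <= k)%nat.

(* Main.v *)
Require Import Defs.
From Stdlib Require Import Reals Lra Lia Psatz Classical List.
Open Scope R_scope.

Lemma exp_le_mono x y : x <= y -> exp x <= exp y.
Proof. intros [H|H]; [left; apply exp_increasing; auto| subst; lra]. Qed.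

Lemma ln_le_mono x y : 0 < x -> x <= y -> ln x <= ln y.
Proof. intros Hx [H|H]; [left; apply ln_increasing; auto| subst; lra]. Qed.

Lemma rpow_ge0 x a : 0 <= rpow x a.
Proof. unfold rpow; destruct (Rlt_dec 0 x); [left; unfold Rpower; apply exp_pos| lra]. Qed.

Lemma rpow_0 a : rpow 0 a = 0.
Proof. unfold rpow; destruct (Rlt_dec 0 0); [lra|auto]. Qed.

Lemma rpow_posE x a : 0 < x -> rpow x a = Rpower x a.
Proof. intros H; unfold rpow; destruct (Rlt_dec 0 x); [auto|lra]. Qed.

Lemma rpow_gt0 x a : 0 < x -> 0 < rpow x a.
Proof. intros H; rewrite rpow_posE; auto; unfold Rpower; apply exp_pos. Qed.

Lemma rpow_lt x y a : 0 < a -> 0 <= x < y -> rpow x a < rpow y a.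
Proof.
  intros Ha [[Hx|Hx] Hxy].
  - rewrite !rpow_posE by lra. apply Rlt_Rpower_l; lra.
  - subst. rewrite rpow_0. apply rpow_gt0; lra.
Qed.

Lemma rpow_le x y a : 0 < a -> 0 <= x <= y -> rpow x a <= rpow y a.
Proof.
  intros Ha [Hx [Hxy|Hxy]]. left; apply rpow_lt; lra. subst; lra.
Qed.

Lemma rpow_lt_inv x y a : 0 < a -> 0 <= x -> 0 <= y -> rpow x a < rpow y a -> x < y.
Proof.
  intros Ha Hx Hy H. destruct (Rlt_le_dec x y); auto.
  assert (rpow y a <= rpow x a) by (apply rpow_le; lra). lra.
Qed.

Lemma rpow_le_inv x y a : 0 < a -> 0 <= x -> 0 <= y -> rpow x a <= rpow y a -> x <= y.
Proof.
  intros Ha Hx Hy H. destruct (Rle_lt_dec x y); auto.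
  assert (rpow y a < rpow x a) by (apply rpow_lt; lra). lra.
Qed.

Lemma frac_le u p : 0 < u <= 1 -> 0 < p <= 1 -> u <= Rpower u p.
Proof.
  intros Hu Hp. unfold Rpower.
  rewrite <- (exp_ln u) at 1 by lra.
  apply exp_le_mono.
  assert (ln u <= 0). { rewrite <- ln_1. apply ln_le_mono; lra. }
  nra.
Qed.

Lemma rpow_subadd s t p : 0 < p <= 1 -> 0 <= s -> 0 <= t ->
  rpow (s + t) p <= rpow s p + rpow t p.
Proof.
  intros Hp [Hs|Hs] [Ht|Ht].
  - rewrite !rpow_posE by lra.
    set (P := Rpower (s+t) p).
    assert (HP : 0 < P) by (unfold P, Rpower; apply exp_pos).
    assert (E : forall z, 0 < z -> Rpower (z / (s+t)) p = Rpower z p / P).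
    { intros z Hz. unfold P, Rpower, Rdiv.
      rewrite ln_mult by (try apply Rinv_0_lt_compat; lra).
      rewrite ln_Rinv by lra.
      replace (p * (ln z + - ln (s+t))) with (p * ln z + - (p * ln (s+t))) by ring.
      rewrite exp_plus, exp_Ropp. reflexivity. }
    assert (H1 : s / (s+t) <= Rpower s p / P).
    { rewrite <- E by lra. apply frac_le; auto. split. apply Rdiv_lt_0_compat; lra.
      apply Rmult_le_reg_r with (s+t). lra. unfold Rdiv. rewrite Rmult_assoc, Rinv_l by lra. lra. }
    assert (H2 : t / (s+t) <= Rpower t p / P).
    { rewrite <- E by lra. apply frac_le; auto. split. apply Rdiv_lt_0_compat; lra.
      apply Rmult_le_reg_r with (s+t). lra. unfold Rdiv. rewrite Rmult_assoc, Rinv_l by lra. lra. }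
    assert (H3 : 1 <= (Rpower s p + Rpower t p) / P).
    { replace 1 with (s/(s+t) + t/(s+t)) by (field; lra).
      unfold Rdiv in *. rewrite Rmult_plus_distr_r. lra. }
    apply Rmult_le_reg_r with (/ P). apply Rinv_0_lt_compat; auto.
    rewrite Rinv_r by lra. exact H3.
  - subst. rewrite Rplus_0_r, rpow_0. lra.
  - subst. rewrite Rplus_0_l, rpow_0. lra.
  - subst. rewrite Rplus_0_l, rpow_0. lra.
Qed.

Lemma weight1 b t p p0 : 0 < t <= b -> p <= p0 ->
  rpow b p <= rpow t (p - p0) * rpow b p0.
Proof.
  intros Ht Hp. rewrite !rpow_posE by lra.
  unfold Rpower. rewrite <- exp_plus. apply exp_le_mono.
  assert (ln t <= ln b) by (apply ln_le_mono; lra). nra.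
Qed.

Lemma weight2 b t p p0 : 0 <= b <= t -> 0 < t -> p <= p0 ->
  rpow t (p - p0) * rpow b p0 <= rpow b p.
Proof.
  intros [[Hb|Hb] Hbt] Ht Hp.
  - rewrite !rpow_posE by lra.
    unfold Rpower. rewrite <- exp_plus. apply exp_le_mono.
    assert (ln b <= ln t) by (apply ln_le_mono; lra). nra.
  - subst. rewrite !rpow_0. lra.
Qed.

Lemma sqrt_triangle a b c d :
  sqrt ((a+c)*(a+c) + (b+d)*(b+d)) <= sqrt (a*a+b*b) + sqrt (c*c+d*d).
Proof.
  set (r1 := sqrt (a*a+b*b)). set (r2 := sqrt (c*c+d*d)).
  assert (H1 : r1 * r1 = a*a+b*b) by (apply sqrt_sqrt; nra).
  assert (H2 : r2 * r2 = c*c+d*d) by (apply sqrt_sqrt; nra).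
  assert (P1 : 0 <= r1) by apply sqrt_pos. assert (P2 : 0 <= r2) by apply sqrt_pos.
  assert (K : a*c+b*d <= r1*r2).
  { destruct (Rle_lt_dec (a*c+b*d) 0). nra.
    assert ((a*c+b*d)*(a*c+b*d) <= (r1*r2)*(r1*r2)).
    { replace ((r1*r2)*(r1*r2)) with ((r1*r1)*(r2*r2)) by ring. rewrite H1, H2.
      assert (0 <= (a*d-b*c)*(a*d-b*c)) by apply Rle_0_sqr.
      replace ((a*a+b*b)*(c*c+d*d)) with ((a*c+b*d)*(a*c+b*d) + (a*d-b*c)*(a*d-b*c)) by ring. lra. }
    assert (0 <= r1*r2) by (apply Rmult_le_pos; auto).
    destruct (Rle_lt_dec (a*c+b*d) (r1*r2)); auto.
    assert ((r1*r2)*(r1*r2) < (a*c+b*d)*(a*c+b*d)) by (apply Rmult_le_0_lt_compat; lra).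
    lra. }
  rewrite <- (sqrt_square (r1 + r2)) by lra.
  apply sqrt_le_1_alt.
  replace ((r1+r2)*(r1+r2)) with (r1*r1 + r2*r2 + 2*(r1*r2)) by ring.
  rewrite H1, H2. lra.
Qed.

Lemma Rsum_ext f g n : (forall i, (i < n)%nat -> f i = g i) -> Rsum f n = Rsum g n.
Proof. induction n; simpl; intros H; auto. rewrite IHn by (intros; apply H; lia). rewrite H by lia. auto. Qed.

Lemma Rsum_le f g n : (forall i, (i < n)%nat -> f i <= g i) -> Rsum f n <= Rsum g n.
Proof. induction n; simpl; intros H. lra. assert (f n <= g n) by (apply H; lia).
  assert (Rsum f n <= Rsum g n) by (apply IHn; intros; apply H; lia). lra. Qed.

Lemma Rsum_lt f g n i0 : (i0 < n)%nat -> (forall i, (i < n)%nat -> f i <= g i) -> f i0 < g i0 ->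
  Rsum f n < Rsum g n.
Proof. induction n; simpl; intros Hi H Hs. lia.
  destruct (Nat.eq_dec i0 n).
  - subst. assert (Rsum f n <= Rsum g n) by (apply Rsum_le; intros; apply H; lia). lra.
  - assert (f n <= g n) by (apply H; lia).
    assert (Rsum f n < Rsum g n) by (apply IHn; auto; try lia; intros; apply H; lia). lra. Qed.

Lemma Rsum_plus f g n : Rsum (fun i => f i + g i) n = Rsum f n + Rsum g n.
Proof. induction n; simpl. lra. rewrite IHn. ring. Qed.

Lemma Rsum_minus f g n : Rsum (fun i => f i - g i) n = Rsum f n - Rsum g n.
Proof. induction n; simpl. lra. rewrite IHn. ring. Qed.

Lemma Rsum_scal c f n : Rsum (fun i => c * f i) n = c * Rsum f n.
Proof. induction n; simpl. lra. rewrite IHn. ring. Qed.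

Lemma Rsum_zero n : Rsum (fun _ => 0) n = 0.
Proof. induction n; simpl. lra. rewrite IHn. ring. Qed.

Lemma Rsum_nonneg f n : (forall i, (i < n)%nat -> 0 <= f i) -> 0 <= Rsum f n.
Proof. intros H. rewrite <- (Rsum_zero n). apply Rsum_le. auto. Qed.

Lemma Rsum_point c i n : (i < n)%nat -> Rsum (fun l => if Nat.eqb l i then c else 0) n = c.
Proof. induction n; simpl; intros H. lia.
  destruct (Nat.eqb_spec n i).
  - subst. rewrite (Rsum_ext _ (fun _ => 0)). rewrite Rsum_zero. ring.
    intros l Hl. destruct (Nat.eqb_spec l i); [lia|auto].
  - rewrite IHn by lia. ring. Qed.

Definition setsum (n : nat) (h : nat -> bool -> R) (S : nat -> bool) : R :=
  Rsum (fun l => h l (S l)) n.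

Definition swap (M : nat -> bool) (i j : nat) : nat -> bool :=
  fun l => if Nat.eqb l i then false else if Nat.eqb l j then true else M l.

Lemma swap_sum n h M i j : (i < n)%nat -> (j < n)%nat -> i <> j -> M i = true -> M j = false ->
  setsum n h (swap M i j) = setsum n h M + (h j true - h j false) + (h i false - h i true).
Proof.
  intros Hi Hj Hij Mi Mj. unfold setsum.
  rewrite <- (Rsum_point (h j true - h j false) j n) by auto.
  rewrite <- (Rsum_point (h i false - h i true) i n) by auto.
  rewrite <- !Rsum_plus. apply Rsum_ext. intros l Hl. unfold swap.
  destruct (Nat.eqb_spec l i); destruct (Nat.eqb_spec l j); subst; try lia.
  - rewrite Mi. ring.
  - rewrite Mj. ring.
  - ring.
Qed.

Definition upd (g : nat -> bool) (n : nat) (b : bool) : nat -> bool :=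
  fun i => if Nat.eqb i n then b else g i.

Fixpoint subs (n : nat) : list (nat -> bool) :=
  match n with
  | O => (fun _ => false) :: nil
  | S n' => flat_map (fun g => upd g n' false :: upd g n' true :: nil) (subs n')
  end.

Lemma subs_complete n (S : nat -> bool) :
  exists g, In g (subs n) /\ forall i, (i < n)%nat -> g i = S i.
Proof.
  induction n.
  - exists (fun _ => false). split. simpl; auto. intros; lia.
  - destruct IHn as [g [Hg Hgs]]. exists (upd g n (S n)). split.
    + simpl. apply in_flat_map. exists g. split; auto. destruct (S n); simpl; auto.
    + intros i Hi. unfold upd. destruct (Nat.eqb_spec i n). subst; auto. apply Hgs; lia.
Qed.

Lemma my_list_max {A : Type} (l : list A) (P : A -> Prop) (f : A -> R) :
  (exists a, In a l /\ P a) ->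
  exists a, In a l /\ P a /\ forall b, In b l -> P b -> f b <= f a.
Proof.
  induction l as [|a l IH]; intros [x [Hx Px]].
  - destruct Hx.
  - destruct (classic (exists b, In b l /\ P b)) as [E|E].
    + destruct (IH E) as [c [Hc [Pc Mc]]].
      destruct (classic (P a /\ f c < f a)) as [[Pa L]|N].
      * exists a. split; [left; auto|]. split; auto. intros b [Hb|Hb] Pb; [subst; lra|].
        specialize (Mc b Hb Pb). lra.
      * exists c. split; [right; auto|]. split; auto. intros b [Hb|Hb] Pb.
        -- subst. destruct (Rle_lt_dec (f b) (f c)); auto. exfalso; apply N; auto.
        -- auto.
    + destruct Hx as [Hx|Hx]; [subst|exfalso; apply E; eauto].
      exists x. split; [left; auto|]. split; auto. intros b [Hb|Hb] Pb; [subst; lra|].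
      exfalso; apply E; eauto.
Qed.

Lemma nat_min N (P : nat -> Prop) (f : nat -> R) :
  (exists i, (i < N)%nat /\ P i) ->
  exists i, (i < N)%nat /\ P i /\ forall j, (j < N)%nat -> P j -> f i <= f j.
Proof.
  induction N; intros [x [Hx Px]]. lia.
  destruct (classic (exists i, (i < N)%nat /\ P i)) as [E|E].
  - destruct (IHN E) as [c [Hc [Pc Mc]]].
    destruct (classic (P N /\ f N < f c)) as [[PN L]|Nn].
    + exists N. split; [lia|]. split; auto. intros j Hj Pj.
      destruct (Nat.eq_dec j N); [subst; lra|]. specialize (Mc j ltac:(lia) Pj). lra.
    + exists c. split; [lia|]. split; auto. intros j Hj Pj.
      destruct (Nat.eq_dec j N); [subst|apply Mc; auto; lia].
      destruct (Rle_lt_dec (f c) (f N)); auto. exfalso; apply Nn; auto.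
  - assert (x = N). { destruct (Nat.eq_dec x N); auto. exfalso; apply E; exists x; split; auto; lia. }
    subst. exists N. split; [lia|]. split; auto. intros j Hj Pj.
    destruct (Nat.eq_dec j N); [subst; lra|]. exfalso; apply E; exists j; split; auto; lia.
Qed.

Definition cardR n S := setsum n (fun _ b => if b then 1 else 0) S.
Definition sumS n (S : nat -> bool) (f : nat -> R) := Rsum (fun i => if S i then f i else 0) n.
Definition sumC n (S : nat -> bool) (f : nat -> R) := Rsum (fun i => if S i then 0 else f i) n.

Lemma setsum_ext n h S T : (forall i, (i < n)%nat -> S i = T i) -> setsum n h S = setsum n h T.
Proof. intros H. unfold setsum. apply Rsum_ext. intros i Hi. rewrite H; auto. Qed.

Lemma nsp_mono n k (a : nat -> R) p p0 :
  0 < p <= p0 -> (forall i, 0 <= a i) -> (exists i, (i < n)%nat /\ 0 < a i) ->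
  (forall S, cardR n S <= INR k ->
     sumS n S (fun i => rpow (a i) p0) < sumC n S (fun i => rpow (a i) p0)) ->
  forall S, cardR n S <= INR k ->
     sumS n S (fun i => rpow (a i) p) < sumC n S (fun i => rpow (a i) p).
Proof.
  intros Hp Ha [i1 [Hi1 Pi1]] NSP S HS.
  set (g := fun i => rpow (a i) p).
  set (h := fun l (b : bool) => (if b then g l else 0) - (if b then 0 else g l)).
  assert (HE : forall T, setsum n h T = sumS n T g - sumC n T g).
  { intros T. unfold setsum, sumS, sumC, h. apply Rsum_minus. }
  destruct (subs_complete n S) as [g0 [Hg0 Eg0]].
  destruct (@my_list_max (nat -> bool) (subs n) (fun T => cardR n T <= INR k) (setsum n h)) as [M [HM [PM MaxM]]].
  { exists g0. split; auto. unfold cardR. rewrite (setsum_ext _ _ g0 S); auto. }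
  assert (MaxM' : forall T, cardR n T <= INR k -> setsum n h T <= setsum n h M).
  { intros T PT. destruct (subs_complete n T) as [gT [HgT EgT]].
    rewrite <- (setsum_ext _ _ gT T) by auto. apply MaxM; auto.
    unfold cardR. rewrite (setsum_ext _ _ gT T); auto. }
  assert (Hs : setsum n h S <= setsum n h M) by (apply MaxM'; auto).
  assert (Dom : forall i j, (i < n)%nat -> (j < n)%nat -> M i = true -> M j = false -> a j <= a i).
  { intros i j Hi Hj Mi Mj. destruct (Rle_lt_dec (a j) (a i)) as [|Lt]; auto. exfalso.
    assert (Hij : i <> j) by (intro; subst; congruence).
    assert (C : cardR n (swap M i j) <= INR k).
    { unfold cardR. rewrite swap_sum by auto. unfold cardR in PM. lra. }
    specialize (MaxM' _ C). rewrite swap_sum in MaxM' by auto.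
    unfold h in MaxM'.
    assert (g i < g j) by (unfold g; apply rpow_lt; [lra| split; auto]). lra. }
  assert (HM0 : setsum n h M < 0).
  { rewrite HE.
    destruct (classic (exists i, (i < n)%nat /\ M i = true)) as [E|E].
    - destruct (nat_min n (fun i => M i = true) a E) as [i0 [Hi0 [Mi0 Mn]]].
      set (t := a i0).
      specialize (NSP M PM).
      destruct (Ha i0) as [Ht|Ht].
      + set (c := rpow t (p - p0)).
        assert (Hc : 0 < c) by (apply rpow_gt0; auto).
        assert (L1 : sumS n M g <= c * sumS n M (fun i => rpow (a i) p0)).
        { unfold sumS. rewrite <- Rsum_scal. apply Rsum_le. intros i Hi.
          destruct (M i) eqn:Mi. apply weight1; [split; [exact Ht| apply Mn; auto] | lra]. lra. }
        assert (L2 : c * sumC n M (fun i => rpow (a i) p0) <= sumC n M g).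
        { unfold sumC. rewrite <- Rsum_scal. apply Rsum_le. intros i Hi.
          destruct (M i) eqn:Mi. lra. apply weight2; [split; [auto| apply Dom; auto] | exact Ht | lra]. }
        assert (c * sumS n M (fun i => rpow (a i) p0) < c * sumC n M (fun i => rpow (a i) p0)).
        { apply Rmult_lt_compat_l; auto. }
        lra.
      + exfalso.
        assert (Z : sumC n M (fun i => rpow (a i) p0) = 0).
        { unfold sumC. apply eq_trans with (Rsum (fun _ => 0) n); [|apply Rsum_zero]; apply Rsum_ext. intros i Hi.
          destruct (M i) eqn:Mi; auto. assert (a i <= a i0) by (apply Dom; auto).
          assert (Hai : a i = 0) by (specialize (Ha i); unfold t in *; lra). rewrite Hai, rpow_0; auto. }
        assert (0 <= sumS n M (fun i => rpow (a i) p0)).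
        { apply Rsum_nonneg. intros i _. destruct (M i); [apply rpow_ge0| lra]. }
        lra.
    - assert (Z : sumS n M g = 0).
      { unfold sumS. apply eq_trans with (Rsum (fun _ => 0) n); [|apply Rsum_zero]; apply Rsum_ext. intros i Hi.
        destruct (M i) eqn:Mi; auto. exfalso; apply E; eauto. }
      assert (0 < sumC n M g).
      { unfold sumC. apply Rle_lt_trans with (Rsum (fun _ => 0) n); [rewrite Rsum_zero; lra|]; apply Rsum_lt with i1; auto.
        - intros i _. destruct (M i); [lra| apply rpow_ge0].
        - destruct (M i1) eqn:Mi. exfalso; apply E; eauto. apply rpow_gt0; auto. }
      lra. }
  rewrite HE in Hs. fold g. lra.
Qed.

Lemma Csum_Re f n : Re (Csum f n) = Rsum (fun k => Re (f k)) n.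
Proof. induction n; simpl; auto. rewrite IHn. auto. Qed.
Lemma Csum_Im f n : Im (Csum f n) = Rsum (fun k => Im (f k)) n.
Proof. induction n; simpl; auto. rewrite IHn. auto. Qed.
Lemma Ceq z w : Re z = Re w -> Im z = Im w -> z = w.
Proof. destruct z, w; simpl; intros; subst; auto. Qed.
Lemma Csum_ext f g n : (forall i, (i < n)%nat -> f i = g i) -> Csum f n = Csum g n.
Proof. induction n; simpl; intros H; auto. rewrite IHn by (intros; apply H; lia). rewrite H by lia. auto. Qed.

Lemma nnz_INR n x : INR (nnz n x) = Rsum (fun i => if Ceq_dec (x i) C0 then 0 else 1) n.
Proof. induction n; simpl; auto. rewrite plus_INR, IHn. destruct (Ceq_dec (x n) C0); simpl; ring. Qed.

Lemma nnz_ext n x y : (forall i, (i < n)%nat -> x i = y i) -> nnz n x = nnz n y.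
Proof. induction n; simpl; intros H; auto. rewrite IHn by (intros; apply H; lia). rewrite H by lia. auto. Qed.

Lemma Cmod_C0 : Cmod C0 = 0.
Proof. unfold Cmod; simpl. rewrite Rmult_0_l, Rplus_0_l. apply sqrt_0. Qed.

Lemma Cmod_ge0 z : 0 <= Cmod z.
Proof. apply sqrt_pos. Qed.

Lemma Cmod_gt0 z : z <> C0 -> 0 < Cmod z.
Proof. intros H. unfold Cmod. apply sqrt_lt_R0. destruct z as [a b]; simpl.
  destruct (Req_dec a 0); destruct (Req_dec b 0); subst; try (exfalso; apply H; reflexivity); nra. Qed.

Lemma Cmod_opp a b : Cmod (mkC (-a) (-b)) = Cmod (mkC a b).
Proof. unfold Cmod; simpl. f_equal. ring. Qed.

Lemma pnorm_posE n p x : p <> 0 -> pnorm n p x = rpow (Rsum (fun i => rpow (Cmod (x i)) p) n) (/ p).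
Proof. intros H. unfold pnorm. destruct (Req_EM_T p 0); [contradiction|reflexivity]. Qed.

Lemma pnorm_ge0 n p x : 0 <= pnorm n p x.
Proof. unfold pnorm. destruct (Req_EM_T p 0). apply pos_INR. apply rpow_ge0. Qed.

Lemma pnorm_ext n p x y : (forall i, (i < n)%nat -> x i = y i) -> pnorm n p x = pnorm n p y.
Proof. intros H. unfold pnorm. destruct (Req_EM_T p 0).
  - rewrite (nnz_ext n x y); auto.
  - f_equal. apply Rsum_ext. intros i Hi. rewrite H; auto. Qed.

Lemma strict_of_unique m n p A u w :
  unique_lp_minimizer m n p A u ->
  vec_eq m (mulmv n A w) (mulmv n A u) -> ~ vec_eq n w u ->
  pnorm n p u < pnorm n p w.
Proof.
  intros [H1 H2] Fw Nw. destruct (Rle_lt_dec (pnorm n p w) (pnorm n p u)) as [L|L]; auto.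
  exfalso. apply Nw. apply H2; auto. intros xh Fxh. specialize (H1 xh Fxh). lra.
Qed.

Lemma nsp_p0 m n p0 A k (v : nat -> Cplx) : 0 < p0 -> kp_prop m n p0 A k ->
  (forall i, (i < m)%nat -> Rsum (fun l => Re (Cmul (A i l) (v l))) n = 0 /\
                            Rsum (fun l => Im (Cmul (A i l) (v l))) n = 0) ->
  (exists i, (i < n)%nat /\ v i <> C0) ->
  forall S, cardR n S <= INR k ->
    sumS n S (fun i => rpow (Cmod (v i)) p0) < sumC n S (fun i => rpow (Cmod (v i)) p0).
Proof.
  intros Hp0 Hkp Hnull [i1 [Hi1 Hv1]] S HS.
  set (u := fun i => if S i then v i else C0).
  set (w := fun i => if S i then C0 else mkC (- Re (v i)) (- Im (v i))).
  assert (Hu : (nnz n u <= k)%nat).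
  { apply INR_le. eapply Rle_trans; [|exact HS]. rewrite nnz_INR. unfold cardR, setsum.
    apply Rsum_le. intros i Hi. unfold u. destruct (S i). destruct (Ceq_dec (v i) C0); lra.
    destruct (Ceq_dec C0 C0); [lra| congruence]. }
  assert (Fw : vec_eq m (mulmv n A w) (mulmv n A u)).
  { intros i Hi. destruct (Hnull i Hi) as [N1 N2]. unfold mulmv. apply Ceq.
    - rewrite !Csum_Re.
      rewrite (Rsum_ext (fun k0 => Re (Cmul (A i k0) (u k0)))
                        (fun k0 => Re (Cmul (A i k0) (v k0)) + Re (Cmul (A i k0) (w k0)))).
      rewrite Rsum_plus, N1. ring.
      intros l Hl. unfold u, w, Cmul; simpl. destruct (S l); simpl; ring.
    - rewrite !Csum_Im.
      rewrite (Rsum_ext (fun k0 => Im (Cmul (A i k0) (u k0)))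
                        (fun k0 => Im (Cmul (A i k0) (v k0)) + Im (Cmul (A i k0) (w k0)))).
      rewrite Rsum_plus, N2. ring.
      intros l Hl. unfold u, w, Cmul; simpl. destruct (S l); simpl; ring. }
  assert (Nw : ~ vec_eq n w u).
  { intros E. specialize (E i1 Hi1). unfold u, w in E. destruct (S i1).
    - apply Hv1; auto.
    - apply Hv1. destruct (v i1) as [a b]; simpl in E. injection E. intros. apply Ceq; simpl; lra. }
  pose proof (strict_of_unique m n p0 A u w (Hkp u Hu) Fw Nw) as L.
  rewrite !pnorm_posE in L by lra.
  apply rpow_lt_inv in L; try (apply Rinv_0_lt_compat; lra);
    try (apply Rsum_nonneg; intros; apply rpow_ge0).
  replace (sumS n S (fun i => rpow (Cmod (v i)) p0)) with (Rsum (fun i => rpow (Cmod (u i)) p0) n).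
  replace (sumC n S (fun i => rpow (Cmod (v i)) p0)) with (Rsum (fun i => rpow (Cmod (w i)) p0) n).
  exact L.
  - apply Rsum_ext. intros i Hi. unfold w. destruct (S i). rewrite Cmod_C0, rpow_0; auto.
    destruct (v i) as [a b]; simpl. rewrite Cmod_opp. auto.
  - apply Rsum_ext. intros i Hi. unfold u. destruct (S i). auto. rewrite Cmod_C0, rpow_0; auto.
Qed.

Lemma core m n p0 A k x y p : 0 < p0 <= 1 -> kp_prop m n p0 A k -> (nnz n x <= k)%nat ->
  vec_eq m (mulmv n A y) (mulmv n A x) -> ~ vec_eq n y x -> 0 <= p <= p0 ->
  pnorm n p x < pnorm n p y.
Proof.
  intros Hp0 Hkp Hx Fy Ny Hp.
  assert (Fx : vec_eq m (mulmv n A x) (mulmv n A y)) by (intros i Hi; symmetry; apply Fy; auto).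
  destruct (Req_dec p 0) as [E|E].
  - subst. unfold pnorm. destruct (Req_EM_T 0 0) as [_|C]; [|lra].
    destruct (Rle_lt_dec (INR (nnz n y)) (INR (nnz n x))) as [L|L]; auto. exfalso.
    apply INR_le in L.
    assert (Hy : (nnz n y <= k)%nat) by lia.
    destruct (Hkp y Hy) as [Y1 _]. destruct (Hkp x Hx) as [X1 X2].
    apply Ny. apply X2; auto. intros xh Fxh. specialize (Y1 x Fx). specialize (X1 xh Fxh). lra.
  - assert (Hpp : 0 < p) by lra.
    set (v := fun l => mkC (Re (y l) - Re (x l)) (Im (y l) - Im (x l))).
    assert (Hnull : forall i, (i < m)%nat -> Rsum (fun l => Re (Cmul (A i l) (v l))) n = 0 /\
                            Rsum (fun l => Im (Cmul (A i l) (v l))) n = 0).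
    { intros i Hi. specialize (Fy i Hi). unfold mulmv in Fy. split.
      - rewrite (Rsum_ext _ (fun l => Re (Cmul (A i l) (y l)) - Re (Cmul (A i l) (x l)))).
        rewrite Rsum_minus, <- !Csum_Re, Fy. ring.
        intros l _. unfold v, Cmul; simpl. ring.
      - rewrite (Rsum_ext _ (fun l => Im (Cmul (A i l) (y l)) - Im (Cmul (A i l) (x l)))).
        rewrite Rsum_minus, <- !Csum_Im, Fy. ring.
        intros l _. unfold v, Cmul; simpl. ring. }
    assert (Hv : exists i, (i < n)%nat /\ v i <> C0).
    { apply NNPP. intros N. apply Ny. intros i Hi. apply NNPP. intros Nxy. apply N.
      exists i. split; auto. intros E0. apply Nxy. unfold v in E0. injection E0. intros.
      apply Ceq; lra. }
    set (a := fun i => Cmod (v i)).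
    assert (NSP := nsp_mono n k a p p0 ltac:(lra) (fun i => Cmod_ge0 _)
                   ltac:(destruct Hv as [i [Hi Hvi]]; exists i; split; auto; apply Cmod_gt0; auto)
                   (nsp_p0 m n p0 A k v ltac:(lra) Hkp Hnull Hv)).
    set (T := fun i => if Ceq_dec (x i) C0 then false else true).
    assert (HT : cardR n T <= INR k).
    { apply Rle_trans with (INR (nnz n x)); [|apply le_INR; auto].
      rewrite nnz_INR. unfold cardR, setsum, T. apply Rsum_le. intros i _.
      destruct (Ceq_dec (x i) C0); lra. }
    specialize (NSP T HT).
    assert (Tf : forall i, T i = false -> x i = C0).
    { intros i. unfold T. destruct (Ceq_dec (x i) C0); auto; discriminate. }
    assert (S1 : Rsum (fun i => rpow (Cmod (x i)) p) n = sumS n T (fun i => rpow (Cmod (x i)) p)).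
    { unfold sumS. apply Rsum_ext. intros i _. destruct (T i) eqn:Ti; auto.
      rewrite Tf, Cmod_C0, rpow_0; auto. }
    assert (S2 : sumS n T (fun i => rpow (Cmod (x i)) p) <=
                 sumS n T (fun i => rpow (Cmod (y i)) p) + sumS n T (fun i => rpow (a i) p)).
    { unfold sumS. rewrite <- Rsum_plus. apply Rsum_le. intros i _. destruct (T i); [|lra].
      eapply Rle_trans; [|apply rpow_subadd; try lra; apply Cmod_ge0].
      apply rpow_le; auto. split. apply Cmod_ge0.
      unfold a, v. destruct (x i) as [xr xi]; destruct (y i) as [yr yi]; simpl.
      unfold Cmod; simpl.
      replace (sqrt ((yr - xr) * (yr - xr) + (yi - xi) * (yi - xi)))
        with (sqrt ((xr - yr) * (xr - yr) + (xi - yi) * (xi - yi))) by (f_equal; ring).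
      replace (xr * xr + xi * xi) with ((yr + (xr - yr)) * (yr + (xr - yr)) + (yi + (xi - yi)) * (yi + (xi - yi))) by ring.
      apply sqrt_triangle. }
    assert (S3 : sumC n T (fun i => rpow (a i) p) = sumC n T (fun i => rpow (Cmod (y i)) p)).
    { unfold sumC. apply Rsum_ext. intros i _. destruct (T i) eqn:Ti; auto.
      unfold a, v. rewrite (Tf i Ti). simpl. destruct (y i) as [yr yi]; simpl. f_equal. f_equal. f_equal; ring. }
    assert (S4 : sumS n T (fun i => rpow (Cmod (y i)) p) + sumC n T (fun i => rpow (Cmod (y i)) p)
                 = Rsum (fun i => rpow (Cmod (y i)) p) n).
    { unfold sumS, sumC. rewrite <- Rsum_plus. apply Rsum_ext. intros i _. destruct (T i); ring. }
    rewrite !pnorm_posE by auto.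
    apply rpow_lt. apply Rinv_0_lt_compat; auto. split.
    apply Rsum_nonneg; intros; apply rpow_ge0.
    lra.
Qed.

Theorem theorem6 (m n : nat) (A : nat -> nat -> Cplx) (p0 : R) (X : nat -> nat -> Cplx) :
  (m < n)%nat ->
  full_row_rank m n A ->
  0 < p0 <= 1 ->
  in_G m n A X ->
  (exists k, is_kp m n p0 A k /\ forall j, (j < m)%nat -> (nnz n (col X j) <= k)%nat) ->
  forall q p : R, 0 < q -> 0 <= p <= p0 ->
    forall Y : nat -> nat -> Cplx, in_ginv_col m n p q A Y <-> mat_eq n m Y X.
Proof.
  intros Hmn Hfr Hp0 HX [k [[Hkp _] Hk]] q p Hq Hp Y.
  assert (Fe : forall Z j, in_G m n A Z -> (j < m)%nat ->
            vec_eq m (mulmv n A (col Z j)) (mulmv n A (col X j))).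
  { intros Z j HZ Hj i Hi. change (mulmm n A Z i j = mulmm n A X i j). rewrite HZ, HX; auto. }
  assert (Cle : forall Z j, in_G m n A Z -> (j < m)%nat ->
            pnorm n p (col X j) <= pnorm n p (col Z j)).
  { intros Z j HZ Hj. destruct (classic (vec_eq n (col Z j) (col X j))) as [E|E].
    - rewrite (pnorm_ext n p (col Z j) (col X j)); auto. lra.
    - left. apply (core m n p0 A k); auto. }
  assert (Ncol : forall Z, in_G m n A Z ->
            Rsum (fun j => rpow (pnorm n p (col X j)) q) m <=
            Rsum (fun j => rpow (pnorm n p (col Z j)) q) m).
  { intros Z HZ. apply Rsum_le. intros j Hj. apply rpow_le; auto. split. apply pnorm_ge0. apply Cle; auto. }
  split.
  - intros [HY Hmin]. specialize (Hmin X HX).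
    intros i j Hi Hj. apply NNPP. intros Ne.
    assert (Nv : ~ vec_eq n (col Y j) (col X j)) by (intros E; apply Ne; apply E; auto).
    assert (L : pnorm n p (col X j) < pnorm n p (col Y j)) by (apply (core m n p0 A k); auto).
    assert (L2 : Rsum (fun j => rpow (pnorm n p (col X j)) q) m <
                 Rsum (fun j => rpow (pnorm n p (col Y j)) q) m).
    { apply Rsum_lt with j; auto.
      - intros j' Hj'. apply rpow_le; auto. split. apply pnorm_ge0. apply Cle; auto.
      - apply rpow_lt; auto. split; auto. apply pnorm_ge0. }
    assert (colnorm n m p q X < colnorm n m p q Y).
    { unfold colnorm. apply rpow_lt. apply Rinv_0_lt_compat; auto. split; auto.
      apply Rsum_nonneg; intros; apply rpow_ge0. }
    lra.
  - intros HYX.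
    assert (HY : in_G m n A Y).
    { intros i j Hi Hj. rewrite <- (HX i j Hi Hj). unfold mulmm. apply Csum_ext.
      intros l Hl. rewrite HYX; auto. }
    split; auto. intros Z HZ.
    assert (E : colnorm n m p q Y = colnorm n m p q X).
    { unfold colnorm. f_equal. apply Rsum_ext. intros j Hj. f_equal. apply pnorm_ext.
      intros i Hi. unfold col. apply HYX; auto. }
    rewrite E. unfold colnorm. apply rpow_le. apply Rinv_0_lt_compat; auto. split.
    apply Rsum_nonneg; intros; apply rpow_ge0. apply Ncol; auto.
Qed.
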